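(* Let $-1<\nu\leq 0$ and let $j_{\nu,1}$ denote the first positive zero of the Bessel function $J_\nu$ of the first kind. Let $p,q\in\mathbb{R}$. Then the inequalities $$(1-p)\mathcal{J}_{\nu+1}(x)+p\frac{\mathcal{J}_{\nu+1}(x)}{\mathcal{J}_{\nu}(x)}>1>(1-q)\mathcal{J}_{\nu+1}(x)+q\frac{\mathcal{J}_{\nu+1}(x)}{\mathcal{J}_{\nu}(x)}$$ hold for all $x\in(0,j_{\nu,1})$ if and only if $p\geq\frac{\nu+1}{\nu+2}$ and $q\leq 0$.
   Context: For $\mu>-1$, $J_\mu(x)=\sum_{n\geq0}\frac{(-1)^n (x/2)^{\mu+2n}}{n!\,\Gamma(\mu+n+1)}$ is the Bessel function of the first kind, and $\mathcal{J}_\mu:\mathbb{R}\to\mathbb{R}$ is the normalized Bessel function $$\mathcal{J}_{\mu}(x)=2^{\mu}\Gamma(\mu+1)x^{-\mu}J_{\mu}(x)=\sum_{n\geq0}\frac{(-1/4)^n}{(\mu+1)_n\, n!}x^{2n},$$ where $(\mu+1)_n=\Gamma(\mu+n+1)/\Gamma(\mu+1)$ is the Pochhammer symbol. In particular $\mathcal{J}_{-1/2}(x)=\cos x$, $\mathcal{J}_{1/2}(x)=\frac{\sin x}{x}$, and $j_{-1/2,1}=\pi/2$. *)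

(* Defs.v *)
From Stdlib Require Import Reals ClassicalEpsilon Arith Factorial.
Open Scope R_scope.

Fixpoint poch (a : R) (n : nat) : R :=
  match n with
  | O => 1
  | S k => poch a k * (a + INR k)
  end.

Definition nbessel_term (mu x : R) (n : nat) : R :=
  (-1/4) ^ n / (poch (mu + 1) n * INR (fact n)) * x ^ (2 * n).

(* Normalized Bessel function: the sum of the (everywhere convergent) series. *)
Definition nbessel (mu x : R) : R :=
  epsilon (inhabits 0) (fun l => infinite_sum (nbessel_term mu x) l).

(* Main.v *)
Require Import Defs.
From Stdlib Require Import Reals Lra Lia ClassicalEpsilon Arith Factorial.
From Coquelicot Require Import Coquelicot.
Open Scope R_scope.


Definition bc (m : R) (n : nat) : R := (-1/4) ^ n / (poch (m + 1) n * INR (fact n)).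
Definition F (m y : R) : R := PSeries (bc m) y.

Lemma poch_pos a n : 0 < a -> 0 < poch a n.
Proof.
  intros Ha; induction n as [|n IH]; simpl; [lra|].
  apply Rmult_lt_0_compat; auto. pose proof (pos_INR n); lra.
Qed.

Lemma poch_S a n : poch a (S n) = a * poch (a + 1) n.
Proof.
  induction n as [|n IH].
  - simpl; ring.
  - change (poch a (S (S n))) with (poch a (S n) * (a + INR (S n))).
    rewrite IH. cbn [poch]. rewrite S_INR. ring.
Qed.

Lemma fact_pos n : 0 < INR (fact n).
Proof. apply lt_0_INR, lt_O_fact. Qed.

Lemma bc_nz m n : -1 < m -> bc m n <> 0.
Proof.
  intros Hm; unfold bc. apply Rmult_integral_contrapositive; split.
  - apply pow_nonzero; lra.
  - apply Rinv_neq_0_compat. apply Rgt_not_eq, Rmult_lt_0_compat.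
    apply poch_pos; lra. apply fact_pos.
Qed.

Lemma bc_S m n : -1 < m -> bc m (S n) = bc m n * (-1/4) / ((m + 1 + INR n) * (INR n + 1)).
Proof.
  intros Hm. unfold bc. simpl poch. rewrite fact_simpl, mult_INR, S_INR.
  pose proof (poch_pos (m+1) n ltac:(lra)). pose proof (fact_pos n).
  pose proof (pos_INR n).
  simpl pow. field. repeat split; lra.
Qed.

Lemma CV_bc m : -1 < m -> CV_radius (bc m) = p_infty.
Proof.
  intros Hm. apply CV_radius_infinite_DAlembert. intro n; apply bc_nz; auto.
  apply is_lim_seq_le_le with (u := fun _ => 0) (w := fun n => / (4 * (m+1)) * / INR (S n)).
  - intro n. rewrite bc_S by auto. pose proof (bc_nz m n Hm). pose proof (pos_INR n).
    rewrite S_INR.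
    replace (bc m n * (-1 / 4) / ((m + 1 + INR n) * (INR n + 1)) / bc m n)
      with (- / (4 * ((m + 1 + INR n) * (INR n + 1)))) by (field; repeat split; lra).
    rewrite Rabs_Ropp, Rabs_pos_eq.
    2: { left; apply Rinv_0_lt_compat; apply Rmult_lt_0_compat; try lra; apply Rmult_lt_0_compat; lra. }
    split. left; apply Rinv_0_lt_compat; apply Rmult_lt_0_compat; try lra; apply Rmult_lt_0_compat; lra.
    rewrite <- Rinv_mult. apply Rinv_le_contravar.
    apply Rmult_lt_0_compat; lra.
    rewrite Rmult_assoc. apply Rmult_le_compat_l; [lra|]. apply Rmult_le_compat_r; lra.
  - apply is_lim_seq_const.
  - replace (Finite 0) with (Rbar_mult (/ (4 * (m+1))) 0) by (simpl; f_equal; ring).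
    apply is_lim_seq_scal_l.
    apply (is_lim_seq_incr_1 (fun n => / INR n)).
    replace (Finite 0) with (Rbar_inv p_infty) by reflexivity.
    apply is_lim_seq_inv. apply is_lim_seq_INR. discriminate.
Qed.

Lemma ex_F m y : -1 < m -> ex_pseries (bc m) y.
Proof. intros Hm; apply CV_radius_inside. rewrite CV_bc by auto. exact I. Qed.

Lemma nbessel_F m x : -1 < m -> nbessel m x = F m (x ^ 2).
Proof.
  intros Hm. unfold nbessel.
  assert (H : infinite_sum (nbessel_term m x) (F m (x ^ 2))).
  { apply is_series_Reals. pose proof (PSeries_correct _ _ (ex_F m (x^2) Hm)) as H.
    unfold is_pseries in H. eapply is_series_ext; [|exact H].
    intro n. rewrite pow_n_pow. unfold nbessel_term, bc.
    rewrite pow_mult. unfold scal; simpl; unfold mult; simpl. rewrite pow_n_pow. ring. }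
  apply uniqueness_sum with (nbessel_term m x); auto.
  apply epsilon_spec. exists (F m (x^2)); auto.
Qed.

Lemma PS_derive_bc m n : -1 < m -> PS_derive (bc m) n = - / (4 * (m + 1)) * bc (m + 1) n.
Proof.
  intros Hm. unfold PS_derive, bc. rewrite poch_S. rewrite fact_simpl, mult_INR.
  pose proof (poch_pos (m+1+1) n ltac:(lra)). pose proof (fact_pos n).
  pose proof (pos_INR n). rewrite S_INR. simpl pow. field. repeat split; lra.
Qed.

Lemma F_derive m y : -1 < m -> is_derive (F m) y (- / (4 * (m + 1)) * F (m + 1) y).
Proof.
  intros Hm. unfold F. replace (- / (4 * (m + 1)) * PSeries (bc (m + 1)) y)
    with (PSeries (PS_derive (bc m)) y).
  apply is_derive_PSeries. rewrite CV_bc by auto. exact I.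
  rewrite <- PSeries_scal. apply PSeries_ext. intro n. rewrite PS_derive_bc by auto. reflexivity.
Qed.

Lemma J_derive m x : -1 < m ->
  is_derive (nbessel m) x (- x / (2 * (m + 1)) * nbessel (m + 1) x).
Proof.
  intros Hm. apply is_derive_ext with (fun x => F m (x ^ 2)).
  intro t. rewrite nbessel_F; auto.
  rewrite (nbessel_F (m+1)) by lra.
  replace (- x / (2 * (m + 1)) * F (m + 1) (x ^ 2))
    with (scal (2 * x) (- / (4 * (m + 1)) * F (m + 1) (x ^ 2))).
  apply (is_derive_comp (F m) (fun t => t ^ 2)). apply F_derive; auto.
  auto_derive; auto. ring.
  unfold scal; simpl; unfold mult; simpl. field. lra.
Qed.

Lemma J_rec m x : -1 < m ->
  nbessel m x = nbessel (m + 1) x - x ^ 2 / (4 * (m + 1) * (m + 2)) * nbessel (m + 2) x.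
Proof.
  intros Hm. rewrite !nbessel_F by lra. unfold F.
  set (k := - / (4 * (m + 1) * (m + 2))).
  transitivity (PSeries (PS_plus (bc (m+1)) (PS_scal k (PS_incr_1 (bc (m+2))))) (x^2)).
  - apply PSeries_ext. intro n. destruct n as [|n].
    + unfold PS_plus, PS_scal, PS_incr_1, bc. simpl. unfold plus, scal, zero; simpl; unfold mult; simpl. field.
    + unfold PS_plus, PS_scal, PS_incr_1. unfold plus, scal; simpl; unfold mult; simpl. unfold bc.
      set (P := poch (m + 1 + 1) n).
      assert (HP : 0 < P) by (apply poch_pos; lra).
      assert (E1 : poch (m+1) (S n) = (m+1) * P) by (rewrite poch_S; reflexivity).
      assert (E2 : poch (m+1+1) (S n) = P * (m + 1 + 1 + INR n)) by reflexivity.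
      assert (E3 : (m+2) * poch (m+2+1) n = P * (m + 1 + 1 + INR n)).
      { rewrite <- poch_S. replace (m+2) with (m+1+1) by ring. reflexivity. }
      assert (E3' : poch (m+2+1) n = P * (m + 1 + 1 + INR n) / (m+2)) by (rewrite <- E3; field; lra).
      rewrite E1, E2, E3'. rewrite fact_simpl, mult_INR, S_INR.
      pose proof (fact_pos n). pose proof (pos_INR n). unfold k. simpl pow.
      field. repeat split; lra.
  - rewrite PSeries_plus. rewrite PSeries_scal, PSeries_incr_1. unfold k. field. lra.
    apply ex_F; lra. apply ex_pseries_scal. apply Rmult_comm. apply ex_pseries_incr_1, ex_F; lra.
Qed.

Lemma J0 m : -1 < m -> nbessel m 0 = 1.
Proof.
  intros Hm. rewrite nbessel_F by auto. unfold F. rewrite pow_i by lia. rewrite PSeries_0.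
  unfold bc. simpl. field.
Qed.

Lemma J_cont m x : -1 < m -> continuity_pt (nbessel m) x.
Proof.
  intros Hm. apply continuity_pt_filterlim. apply (ex_derive_continuous (nbessel m)).
  eexists. apply J_derive; auto.
Qed.

Lemma Jd m x : -1 < m ->
  derivable_pt_lim (nbessel m) x (- x / (2 * (m + 1)) * nbessel (m + 1) x).
Proof. intros Hm. apply is_derive_Reals, J_derive; auto. Qed.

Lemma cont_near f x0 eps : continuity_pt f x0 -> 0 < eps ->
  exists d, 0 < d /\ forall x, Rabs (x - x0) < d -> Rabs (f x - f x0) < eps.
Proof.
  intros Hc He. destruct (Hc eps He) as [d [Hd H]]. exists d; split; [lra|].
  intros x Hx. destruct (Req_dec x x0) as [->|Hne].
  - rewrite Rminus_diag, Rabs_R0; lra.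
  - apply (H x). split. split; [exact I| auto]. exact Hx.
Qed.

Lemma Rpower_gt0 x y : 0 < Rpower x y.
Proof. unfold Rpower; apply exp_pos. Qed.

Lemma pos_next m z : -1 < m -> 0 < z ->
  (forall x, 0 < x < z -> 0 < nbessel m x) ->
  forall y, 0 < y <= z -> 0 < nbessel (m + 1) y.
Proof.
  intros Hm Hz HB y Hy.
  destruct (cont_near (nbessel (m+1)) 0 (1/2) (J_cont (m+1) 0 ltac:(lra)) ltac:(lra)) as [d [Hd Hn]].
  rewrite J0 in Hn by lra.
  set (x0 := Rmin d y / 2).
  assert (Hx0 : 0 < x0 < y).
  { unfold x0. pose proof (Rmin_l d y); pose proof (Rmin_r d y).
    assert (0 < Rmin d y) by (apply Rmin_glb_lt; lra). lra. }
  assert (HA0 : 0 < nbessel (m+1) x0).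
  { assert (Rabs (x0 - 0) < d).
    { rewrite Rminus_0_r, Rabs_pos_eq by lra. unfold x0.
      pose proof (Rmin_l d y). lra. }
    specialize (Hn x0 H). apply Rabs_def2 in Hn. lra. }
  set (Phi := fun x => Rpower x (2*m+2) * nbessel (m+1) x).
  set (Phi' := fun x => (2*m+2) * Rpower x (2*m+2-1) * nbessel (m+1) x +
                        Rpower x (2*m+2) * (- x / (2 * (m + 1 + 1)) * nbessel (m + 1 + 1) x)).
  destruct (MVT_cor2 Phi Phi' x0 y ltac:(lra)) as [c [Hc1 Hc2]].
  { intros c Hc. unfold Phi, Phi'.
    apply (derivable_pt_lim_mult (fun x => Rpower x (2*m+2)) (nbessel (m+1))).
    apply derivable_pt_lim_power; lra. apply Jd; lra. }
  assert (HPc : 0 < Phi' c).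
  { unfold Phi'. pose proof (J_rec m c Hm) as Hr.
    replace (m + 1 + 1) with (m + 2) by ring.
    assert (E1 : Rpower c (2*m+2-1) = Rpower c (2*m+1)) by (f_equal; ring).
    assert (E2 : Rpower c (2*m+2) = Rpower c (2*m+1) * c).
    { replace (2*m+2) with ((2*m+1) + 1) by ring. rewrite Rpower_plus, Rpower_1 by lra. reflexivity. }
    rewrite E1, E2.
    replace ((2 * m + 2) * Rpower c (2 * m + 1) * nbessel (m + 1) c +
      Rpower c (2 * m + 1) * c * (- c / (2 * (m + 2)) * nbessel (m + 2) c))
      with (Rpower c (2*m+1) * (2*(m+1)) * nbessel m c) by (rewrite Hr; field; lra).
    apply Rmult_lt_0_compat. apply Rmult_lt_0_compat. apply Rpower_gt0. lra.
    apply HB. lra. }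
  assert (HP0 : 0 < Phi x0) by (unfold Phi; apply Rmult_lt_0_compat; [apply Rpower_gt0|auto]).
  assert (HPy : 0 < Phi y) by (assert (0 < Phi' c * (y - x0)) by (apply Rmult_lt_0_compat; lra); lra).
  unfold Phi in HPy. pose proof (Rpower_gt0 y (2*m+2)).
  destruct (Rlt_le_dec 0 (nbessel (m+1) y)) as [h|h]; auto.
  assert (Rpower y (2*m+2) * nbessel (m+1) y <= 0).
  { nra. } lra.
Qed.

Lemma DerJ m x : -1 < m -> Derive (nbessel m) x = - x / (2 * (m + 1)) * nbessel (m + 1) x.
Proof. intros Hm. apply is_derive_unique, J_derive; auto. Qed.

Lemma exJ m x : -1 < m -> ex_derive (nbessel m) x.
Proof. intros Hm. eexists; apply J_derive; auto. Qed.

Lemma mvt0 f f' x : 0 < x -> (forall c, 0 <= c <= x -> is_derive f c (f' c)) ->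
  (forall c, 0 < c < x -> 0 < f' c) -> f 0 < f x.
Proof.
  intros Hx Hd Hp. destruct (MVT_cor2 f f' 0 x Hx) as [c [H1 H2]].
  intros c Hc; apply is_derive_Reals; auto.
  assert (0 < f' c * (x - 0)) by (apply Rmult_lt_0_compat; [apply Hp; lra| lra]). lra.
Qed.

Lemma mvt0le f f' x : 0 < x -> (forall c, 0 <= c <= x -> is_derive f c (f' c)) ->
  (forall c, 0 < c < x -> 0 <= f' c) -> f 0 <= f x.
Proof.
  intros Hx Hd Hp. destruct (MVT_cor2 f f' 0 x Hx) as [c [H1 H2]].
  intros c Hc; apply is_derive_Reals; auto.
  assert (0 <= f' c * (x - 0)) by (apply Rmult_le_pos; [apply Hp; lra| lra]). lra.
Qed.

Lemma test (nu : R) (Hn : -1 < nu) c :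
  is_derive (fun x => nbessel (nu+1) x * nbessel (nu+1) x - nbessel nu x * nbessel (nu+2) x) c
   (c * ( nbessel (nu+1) c * nbessel (nu+2) c * (1 / (2*(nu+1)) - 1/(nu+2))
        + nbessel nu c * nbessel (nu+3) c / (2 * (nu+3)))).
Proof.
  auto_derive.
  repeat split; apply exJ; lra.
  rewrite !DerJ by lra.
  replace (nu+1+1) with (nu+2) by ring. replace (nu+2+1) with (nu+3) by ring.
  field. lra.
Qed.

Lemma keyE a b s : 0 < b -> ((1 - s) * a + s * (a / b) - 1) * b = s * a * (1 - b) - b * (1 - a).
Proof. intros; field; lra. Qed.

Lemma pos_of_mul X b : 0 < b -> 0 < X * b -> 0 < X.
Proof. intros Hb H. destruct (Rle_lt_dec X 0) as [h|h]; auto. nra. Qed.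

Lemma neg_of_mul X b : 0 < b -> X * b < 0 -> X < 0.
Proof. intros Hb H. destruct (Rle_lt_dec 0 X) as [h|h]; auto. nra. Qed.

Theorem theorem3p2 (nu p q j : R) :
  -1 < nu <= 0 ->
  0 < j -> nbessel nu j = 0 ->
  (forall x, 0 < x < j -> nbessel nu x <> 0) ->
  ((forall x, 0 < x < j ->
      (1 - p) * nbessel (nu + 1) x + p * (nbessel (nu + 1) x / nbessel nu x) > 1 /\
      1 > (1 - q) * nbessel (nu + 1) x + q * (nbessel (nu + 1) x / nbessel nu x))
   <-> (p >= (nu + 1) / (nu + 2) /\ q <= 0)).
Proof.
  intros [Hn1 Hn2] Hj Hjz Hnz.
  assert (Hm : -1 < nu) by lra.
  assert (HB : forall x, 0 < x < j -> 0 < nbessel nu x).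
  { intros x Hx. destruct (Rlt_le_dec 0 (nbessel nu x)) as [h|h]; auto.
    exfalso. assert (h' : nbessel nu x < 0).
    { destruct h as [h|h]; auto. exfalso; apply (Hnz x Hx); auto. }
    destruct (IVT (fun t => - nbessel nu t) 0 x) as [z [Hz1 Hz2]].
    - intro t. apply (continuity_pt_opp (nbessel nu)). apply J_cont; auto.
    - lra.
    - rewrite J0 by auto. lra.
    - lra.
    - assert (z <> 0). { intro e; subst z. rewrite J0 in Hz2 by auto. lra. }
      apply (Hnz z). lra. lra. }
  assert (HA : forall x, 0 < x <= j -> 0 < nbessel (nu+1) x) by (apply pos_next; auto).
  assert (HC : forall x, 0 < x <= j -> 0 < nbessel (nu+2) x).
  { intros x Hx. replace (nu+2) with (nu+1+1) by ring. apply (pos_next (nu+1) j); try lra; auto.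
    intros y Hy; apply HA; lra. }
  assert (HE : forall x, 0 < x <= j -> 0 < nbessel (nu+3) x).
  { intros x Hx. replace (nu+3) with (nu+2+1) by ring. apply (pos_next (nu+2) j); try lra; auto.
    intros y Hy; apply HC; lra. }
  assert (HB1 : forall x, 0 < x < j -> nbessel nu x < 1).
  { intros x Hx. rewrite <- (J0 nu) by auto.
    apply Ropp_lt_cancel.
    apply (mvt0 (fun t => - nbessel nu t) (fun c => c / (2*(nu+1)) * nbessel (nu+1) c) x).
    lra. intros c Hc. auto_derive. apply exJ; auto. rewrite DerJ by auto. field; lra.
    intros c Hc. apply Rmult_lt_0_compat. apply Rdiv_lt_0_compat; lra. apply HA; lra. }
  assert (HA1 : forall x, 0 < x < j -> nbessel (nu+1) x < 1).
  { intros x Hx. pose proof (J0 (nu+1) ltac:(lra)) as E0.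
    enough (- nbessel (nu+1) 0 < - nbessel (nu+1) x) by lra.
    apply (mvt0 (fun t => - nbessel (nu+1) t) (fun c => c / (2*(nu+2)) * nbessel (nu+2) c) x).
    lra. intros c Hc. auto_derive. apply exJ; lra. rewrite DerJ by lra.
    replace (nu+1+1) with (nu+2) by ring. field; lra.
    intros c Hc. apply Rmult_lt_0_compat. apply Rdiv_lt_0_compat; lra. apply HC; lra. }
  assert (HAB : forall x, 0 < x < j -> nbessel nu x < nbessel (nu+1) x).
  { intros x Hx. rewrite (J_rec nu x Hm).
    assert (0 < x ^ 2 / (4 * (nu + 1) * (nu + 2)) * nbessel (nu + 2) x).
    { apply Rmult_lt_0_compat. apply Rdiv_lt_0_compat. simpl; nra.
      apply Rmult_lt_0_compat; lra. apply HC; lra. }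
    lra. }
  assert (HT : forall x, 0 < x < j ->
     nbessel nu x * nbessel (nu+2) x <= nbessel (nu+1) x * nbessel (nu+1) x).
  { intros x Hx.
    assert (H0 : nbessel (nu+1) 0 * nbessel (nu+1) 0 - nbessel nu 0 * nbessel (nu+2) 0 <=
       nbessel (nu+1) x * nbessel (nu+1) x - nbessel nu x * nbessel (nu+2) x).
    { apply (mvt0le (fun x => nbessel (nu+1) x * nbessel (nu+1) x - nbessel nu x * nbessel (nu+2) x)
        (fun c => c * ( nbessel (nu+1) c * nbessel (nu+2) c * (1 / (2*(nu+1)) - 1/(nu+2))
        + nbessel nu c * nbessel (nu+3) c / (2 * (nu+3)))) x).
      lra. intros c Hc. apply test; auto.
      intros c Hc. apply Rmult_le_pos. lra.
      assert (Hk : 0 <= 1 / (2*(nu+1)) - 1/(nu+2)).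
      { replace (1 / (2*(nu+1)) - 1/(nu+2)) with ((-nu) / (2*(nu+1)*(nu+2))) by (field; lra).
        apply Rdiv_le_0_compat. lra. apply Rmult_lt_0_compat; lra. }
      apply Rplus_le_le_0_compat.
      apply Rmult_le_pos; auto. apply Rmult_le_pos; left; [apply HA|apply HC]; lra.
      apply Rmult_le_pos. apply Rmult_le_pos; left; [apply HB|apply HE]; lra.
      left; apply Rinv_0_lt_compat; lra. }
    rewrite !J0 in H0 by lra. lra. }
  assert (HBc : forall c, 0 <= c < j -> 0 < nbessel nu c).
  { intros c Hc. destruct (Req_dec c 0) as [->|hc]. rewrite J0; lra. apply HB; lra. }
  assert (HAc : forall c, 0 <= c < j -> 0 < nbessel (nu+1) c).
  { intros c Hc. destruct (Req_dec c 0) as [->|hc]. rewrite J0; lra. apply HA; lra. }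
  set (r := (nu + 1) / (nu + 2)).
  assert (Hr : 0 < r < 1).
  { assert (E : r = 1 - 1 / (nu + 2)) by (unfold r; field; lra).
    assert (0 < 1 / (nu+2) < 1).
    { split. apply Rdiv_lt_0_compat; lra. unfold Rdiv. rewrite Rmult_1_l.
      rewrite <- Rinv_1. apply Rinv_lt_contravar; lra. }
    split. unfold r; apply Rdiv_lt_0_compat; lra. lra. }
  assert (HPsi : forall x, 0 < x < j ->
     nbessel nu x * (1 - nbessel (nu+1) x) < r * nbessel (nu+1) x * (1 - nbessel nu x)).
  { intros x Hx.
    assert (H0 : r * (/ nbessel nu 0 - 1) - (/ nbessel (nu+1) 0 - 1) <
                 r * (/ nbessel nu x - 1) - (/ nbessel (nu+1) x - 1)).
    { apply (mvt0 (fun t => r * (/ nbessel nu t - 1) - (/ nbessel (nu+1) t - 1))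
        (fun c => c / (2*(nu+2)) * (nbessel (nu+1) c / (nbessel nu c)^2
                     - nbessel (nu+2) c / (nbessel (nu+1) c)^2)) x).
      lra.
      intros c Hc. pose proof (HBc c ltac:(lra)). pose proof (HAc c ltac:(lra)).
      auto_derive. repeat split; try apply exJ; lra.
      rewrite !DerJ by lra. replace (nu+1+1) with (nu+2) by ring. unfold r. field.
      repeat split; lra.
      intros c Hc. apply Rmult_lt_0_compat. apply Rdiv_lt_0_compat; lra.
      pose proof (HB c ltac:(lra)). pose proof (HA c ltac:(lra)). pose proof (HC c ltac:(lra)).
      pose proof (HAB c ltac:(lra)). pose proof (HT c ltac:(lra)).
      set (b := nbessel nu c) in *. set (a := nbessel (nu+1) c) in *. set (cc := nbessel (nu+2) c) in *.
      replace (a / b ^ 2 - cc / a ^ 2) with ((a * a * a - cc * b * b) / (a^2 * b^2)) by (field; lra).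
      apply Rdiv_lt_0_compat; [|apply Rmult_lt_0_compat; apply pow_lt; lra].
      assert (a * (b * cc) <= a * (a * a)) by (apply Rmult_le_compat_l; lra).
      assert (b * (b * cc) < a * (b * cc)) by (apply Rmult_lt_compat_r; [apply Rmult_lt_0_compat|]; lra).
      assert (a * a * a - cc * b * b = a * (a * a) - b * (b * cc)) by ring.
      lra. }
    rewrite !J0 in H0 by lra.
    pose proof (HB x Hx). pose proof (HA x ltac:(lra)).
    set (b := nbessel nu x) in *. set (a := nbessel (nu+1) x) in *.
    assert (E : (r * (/ b - 1) - (/ a - 1)) * (a * b) = r * a * (1 - b) - b * (1 - a)) by (field; lra).
    assert (0 < (r * (/ b - 1) - (/ a - 1)) * (a * b)).
    { apply Rmult_lt_0_compat. lra. nra. }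
    lra. }
  split.
  - intros H. split.
    + destruct (Rlt_le_dec p r) as [Hpr|Hpr]; [exfalso|lra].
      destruct (Rle_lt_dec p 0) as [Hp0|Hp0].
      * destruct (H (j/2) ltac:(lra)) as [H1 _].
        pose proof (HB (j/2) ltac:(lra)). pose proof (HA (j/2) ltac:(lra)).
        pose proof (HA1 (j/2) ltac:(lra)). pose proof (HB1 (j/2) ltac:(lra)).
        set (b := nbessel nu (j/2)) in *. set (a := nbessel (nu+1) (j/2)) in *.
        assert (H2k := keyE a b p ltac:(lra)).
        assert (0 < ((1 - p) * a + p * (a / b) - 1) * b) by (apply Rmult_lt_0_compat; lra).
        assert (0 <= - p * (a * (1 - b))) by (apply Rmult_le_pos; nra).
        nra.
      * set (k := (p + r) / 2).
        assert (Hk : p < k < r) by (unfold k; lra).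
        assert (Ekr : k * (nu + 2) / (nu + 1) = k / r) by (unfold r; field; lra).
        assert (Hkr : k / r < 1).
        { apply (Rmult_lt_reg_r r); [lra|]. unfold Rdiv. rewrite Rmult_assoc, Rinv_l; lra. }
        set (e1 := 1 - k * (nu + 2) / (nu + 1)).
        assert (He1 : 0 < e1) by (unfold e1; lra).
        set (e2 := 1 - p / k).
        assert (Hpk : p / k < 1).
        { apply (Rmult_lt_reg_r k); [lra|]. unfold Rdiv. rewrite Rmult_assoc, Rinv_l; lra. }
        assert (He2 : 0 < e2) by (unfold e2; lra).
        destruct (cont_near (nbessel (nu+2)) 0 e1 (J_cont (nu+2) 0 ltac:(lra)) He1) as [d1 [Hd1 H1]].
        destruct (cont_near (nbessel nu) 0 e2 (J_cont _ _ Hm) He2) as [d2 [Hd2 H2]].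
        rewrite J0 in H1, H2 by lra.
        set (x := Rmin (Rmin d1 d2) j / 2).
        assert (Hx : 0 < x < j /\ x < d1 /\ x < d2).
        { unfold x. pose proof (Rmin_l (Rmin d1 d2) j). pose proof (Rmin_r (Rmin d1 d2) j).
          pose proof (Rmin_l d1 d2). pose proof (Rmin_r d1 d2).
          assert (0 < Rmin d1 d2) by (apply Rmin_glb_lt; lra).
          assert (0 < Rmin (Rmin d1 d2) j) by (apply Rmin_glb_lt; lra). lra. }
        assert (HG : 0 < (1 - nbessel (nu+1) x) - k * (1 - nbessel nu x)).
        { assert (G0 : (1 - nbessel (nu+1) 0) - k * (1 - nbessel nu 0) <
                       (1 - nbessel (nu+1) x) - k * (1 - nbessel nu x)).
          { apply (mvt0 (fun t => (1 - nbessel (nu+1) t) - k * (1 - nbessel nu t))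
             (fun c => c / 2 * (nbessel (nu+2) c / (nu+2) - k * nbessel (nu+1) c / (nu+1))) x).
            lra.
            intros c Hc. auto_derive. repeat split; apply exJ; lra.
            rewrite !DerJ by lra. replace (nu+1+1) with (nu+2) by ring. field; lra.
            intros c Hc. apply Rmult_lt_0_compat. lra.
            assert (Hc1 : Rabs (c - 0) < d1) by (rewrite Rminus_0_r, Rabs_pos_eq; lra).
            specialize (H1 c Hc1). apply Rabs_def2 in H1.
            pose proof (HA1 c ltac:(lra)).
            set (Cc := nbessel (nu+2) c) in *. set (Ac := nbessel (nu+1) c) in *.
            assert (HCc : k * (nu + 2) / (nu + 1) < Cc) by (unfold e1 in H1; lra).
            assert (H5 := Rmult_lt_compat_r (nu+1) _ _ ltac:(lra) HCc).
            replace (k * (nu + 2) / (nu + 1) * (nu + 1)) with (k * (nu + 2)) in H5 by (field; lra).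
            replace (Cc / (nu + 2) - k * Ac / (nu + 1))
              with ((Cc * (nu + 1) - k * Ac * (nu + 2)) / ((nu + 1) * (nu + 2))) by (field; lra).
            apply Rdiv_lt_0_compat; [| apply Rmult_lt_0_compat; lra].
            assert (0 < k * (nu + 2) * (1 - Ac)) by (apply Rmult_lt_0_compat; [apply Rmult_lt_0_compat|]; lra).
            lra. }
          rewrite !J0 in G0 by lra. lra. }
        destruct Hx as [Hx [Hx1 Hx2]].
        destruct (H x Hx) as [H3 _].
        assert (Hc2 : Rabs (x - 0) < d2) by (rewrite Rminus_0_r, Rabs_pos_eq; lra).
        specialize (H2 x Hc2). apply Rabs_def2 in H2.
        pose proof (HB x Hx). pose proof (HA x ltac:(lra)).
        pose proof (HA1 x Hx). pose proof (HB1 x Hx).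
        set (b := nbessel nu x) in *. set (a := nbessel (nu+1) x) in *.
        assert (Hbk : p / k < b) by (unfold e2 in H2; lra).
        assert (Hkb : p < k * b).
        { assert (H6k := Rmult_lt_compat_r k _ _ ltac:(lra) Hbk).
          replace (p / k * k) with p in H6k by (field; lra). lra. }
        assert (S1 : 0 < ((1 - a) - k * (1 - b)) * b) by (apply Rmult_lt_0_compat; lra).
        assert (S2 : 0 < (k * b - p) * (1 - b)) by (apply Rmult_lt_0_compat; lra).
        assert (S3 : 0 < p * (1 - b) * (1 - a)) by (apply Rmult_lt_0_compat; [apply Rmult_lt_0_compat|]; lra).
        assert (E := keyE a b p ltac:(lra)).
        assert (0 < ((1 - p) * a + p * (a / b) - 1) * b) by (apply Rmult_lt_0_compat; lra).
        nra.
    + destruct (Rle_lt_dec q 0) as [|Hq0]; auto. exfalso.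
      pose proof (HA j ltac:(lra)) as HAj.
      set (aj := nbessel (nu+1) j) in *.
      set (w := Rmin (1/2) (q * aj / 4)).
      assert (Hw : 0 < w /\ w <= 1/2 /\ w <= q * aj / 4).
      { unfold w. split. apply Rmin_glb_lt. lra. apply Rdiv_lt_0_compat; [nra|lra].
        split; [apply Rmin_l|apply Rmin_r]. }
      destruct (cont_near (nbessel (nu+1)) j (aj/2) (J_cont (nu+1) j ltac:(lra)) ltac:(lra)) as [d1 [Hd1 H1]].
      destruct (cont_near (nbessel nu) j w (J_cont _ _ Hm) ltac:(lra)) as [d2 [Hd2 H2]].
      rewrite Hjz in H2. fold aj in H1.
      set (x := j - Rmin (Rmin d1 d2) j / 2).
      assert (Hx : 0 < x < j /\ Rabs (x - j) < d1 /\ Rabs (x - j) < d2).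
      { unfold x. pose proof (Rmin_l (Rmin d1 d2) j). pose proof (Rmin_r (Rmin d1 d2) j).
        pose proof (Rmin_l d1 d2). pose proof (Rmin_r d1 d2).
        assert (0 < Rmin d1 d2) by (apply Rmin_glb_lt; lra).
        assert (0 < Rmin (Rmin d1 d2) j) by (apply Rmin_glb_lt; lra).
        rewrite Rabs_left by lra. lra. }
      destruct Hx as [Hx [Hx1 Hx2]].
      specialize (H1 x Hx1). specialize (H2 x Hx2). apply Rabs_def2 in H1. apply Rabs_def2 in H2.
      destruct (H x Hx) as [_ H3]. destruct Hw as [Hw1 [Hw2 Hw3]].
      pose proof (HB x Hx). pose proof (HA x ltac:(lra)).
      set (b := nbessel nu x) in *. set (a := nbessel (nu+1) x) in *.
      assert (S1 : 0 < (a - aj / 2) * (1 - b)) by (apply Rmult_lt_0_compat; lra).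
      assert (S2 : 0 <= aj / 2 * (1 / 2 - b)) by (apply Rmult_le_pos; lra).
      assert (S3 : aj / 4 < a * (1 - b)) by nra.
      assert (S4 : q * (aj / 4) < q * (a * (1 - b))) by (apply Rmult_lt_compat_l; lra).
      assert (S5 : 0 < a * b) by (apply Rmult_lt_0_compat; lra).
      assert (E := keyE a b q ltac:(lra)).
      assert (((1 - q) * a + q * (a / b) - 1) < 0) by lra.
      assert (0 < ((1 - q) * a + q * (a / b) - 1) * b).
      { rewrite E. replace (q * aj / 4) with (q * (aj / 4)) in Hw3 by field. nra. }
      nra.
  - intros [Hp Hq] x Hx.
    pose proof (HB x Hx). pose proof (HA x ltac:(lra)).
    pose proof (HA1 x Hx). pose proof (HB1 x Hx). pose proof (HPsi x Hx).
    set (b := nbessel nu x) in *. set (a := nbessel (nu+1) x) in *.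
    assert (Hab : 0 < a * (1 - b)) by (apply Rmult_lt_0_compat; lra).
    split.
    + assert (0 < (1 - p) * a + p * (a / b) - 1); [|lra].
      apply (pos_of_mul _ b); auto. rewrite keyE by lra.
      assert (r * (a * (1 - b)) <= p * (a * (1 - b))) by (apply Rmult_le_compat_r; lra).
      nra.
    + assert ((1 - q) * a + q * (a / b) - 1 < 0); [|lra].
      apply (neg_of_mul _ b); auto. rewrite keyE by lra.
      assert (q * (a * (1 - b)) <= 0) by nra.
      assert (0 < b * (1 - a)) by (apply Rmult_lt_0_compat; lra).
      nra.
Qed.
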